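(* Let $A$ be a fixed $s \times t$ matrix and let $A'$ be the $s' \times t$ matrix obtained from $A$ by deleting rows that are equal to their predecessors in $A$. There exist polynomials $p_1,p_2$ (depending only on $A$) such that for every $\epsilon > 0$, with $n_1 = p_1(\epsilon^{-1})$ and $\tau = 1/p_2(\epsilon^{-1})$, for every $n \geq n_1$, every $n \times n$ matrix $M$ that contains $\epsilon n^{s'+t}$ copies of $A'$ also contains $\tau n^{s+t}$ copies of $A$.
   Context: Matrices are over a fixed finite alphabet, with ordered rows and columns. A submatrix is obtained by deleting rows and columns while preserving order; a copy of a matrix $B$ in $M$ is a submatrix of $M$ equal to $B$. The predecessor of a row in $A$ is the row immediately preceding it in $A$. *)

(* Defs.v *)
From HB Require Import structures.
From mathcomp Require Import all_boot all_order all_algebra.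
From mathcomp Require Import reals.
Set Implicit Arguments. Unset Strict Implicit. Unset Printing Implicit Defensive.
Import Order.TTheory GRing.Theory Num.Theory.

Definition incr_map (m n : nat) (f : {ffun 'I_m -> 'I_n}) : bool :=
  [forall i : 'I_m, forall i' : 'I_m, (i < i')%N ==> (f i < f i')%N].

Definition copies (T : finType) (s t n : nat) (B : 'M[T]_(s, t)) (M : 'M[T]_n) : nat :=
  #|[set rc : {ffun 'I_s -> 'I_n} * {ffun 'I_t -> 'I_n} |
      [&& incr_map rc.1, incr_map rc.2 &
          [forall i, forall j, M (rc.1 i) (rc.2 j) == B i j]]]|.

Definition keep_row (T : finType) (s t : nat) (A : 'M[T]_(s, t)) (i : 'I_s) : bool :=
  (val i == 0%N) ||
  [exists k : 'I_s, ((val k).+1 == val i) && (row k A != row i A)].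

Definition kept_rows (T : finType) (s t : nat) (A : 'M[T]_(s, t)) : seq 'I_s :=
  [seq i <- enum 'I_s | keep_row A i].

Definition dedup_size (T : finType) (s t : nat) (A : 'M[T]_(s, t)) : nat :=
  size (kept_rows A).

Definition dedup (T : finType) (s t : nat) (A : 'M[T]_(s, t)) : 'M[T]_(dedup_size A, t) :=
  \matrix_(i < dedup_size A, j < t) A (tnth (in_tuple (kept_rows A)) i) j.

(* Main.v *)
Require Import Defs.
From HB Require Import structures.
From mathcomp Require Import all_boot all_order all_algebra.
From mathcomp Require Import reals.
From mathcomp Require Import ring lra zify.
Set Implicit Arguments. Unset Strict Implicit. Unset Printing Implicit Defensive.
Import Order.TTheory GRing.Theory Num.Theory.

Module Aux.
Section File_H2.


Section CS.
Local Open Scope ring_scope.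
Lemma cauchy_schwarz (R : realFieldType) (I : finType) (a : I -> R) :
  (\sum_i a i) ^+ 2 <= #|I|%:R * \sum_i a i ^+ 2.
Proof.
have H : 0 <= \sum_i \sum_j (a i - a j) ^+ 2.
  by apply: sumr_ge0 => i _; apply: sumr_ge0 => j _; exact: sqr_ge0.
have E : forall i, \sum_j (a i - a j) ^+ 2 =
   #|I|%:R * a i ^+ 2 - (a i * \sum_j a j) *+ 2 + \sum_j a j ^+ 2.
  move=> i; under eq_bigr do rewrite sqrrB.
  rewrite big_split sumrB sumr_const sumrMnl mulr_sumr /=.
  by rewrite mulr_natl.
move: H; under eq_bigr do rewrite E.
rewrite big_split sumrB /= sumrMnl -mulr_suml -mulr_sumr sumr_const -mulr_natl.
rewrite -mulr_natl.
set S := \sum_i a i. set Q := \sum_i a i ^+ 2. set N := #|I|%:R.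
lra.
Qed.

End CS.

Definition copyset (T : finType) (s t n : nat) (B : 'M[T]_(s, t)) (M : 'M[T]_n) :=
  [set rc : {ffun 'I_s -> 'I_n} * {ffun 'I_t -> 'I_n} |
      [&& incr_map rc.1, incr_map rc.2 &
          [forall i, forall j, M (rc.1 i) (rc.2 j) == B i j]]].

Lemma copiesE (T : finType) (s t n : nat) (B : 'M[T]_(s, t)) (M : 'M[T]_n) :
  copies B M = #|copyset B M|.
Proof. by []. Qed.

Lemma incrP m n (f : {ffun 'I_m -> 'I_n}) :
  reflect (forall a b : 'I_m, (a < b)%N -> (f a < f b)%N) (incr_map f).
Proof.
apply: (iffP forallP) => [H a b ab | H a].
  by move/forallP: (H a) => /(_ b) /implyP; apply.
by apply/forallP => b; apply/implyP; apply: H.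
Qed.

Lemma copysetP (T : finType) (s t n : nat) (B : 'M[T]_(s, t)) (M : 'M[T]_n) (rc : {ffun 'I_s -> 'I_n} * {ffun 'I_t -> 'I_n}) :
  reflect [/\ forall a b : 'I_s, (a < b)%N -> (rc.1 a < rc.1 b)%N,
              forall a b : 'I_t, (a < b)%N -> (rc.2 a < rc.2 b)%N &
              forall i j, M (rc.1 i) (rc.2 j) = B i j]
          (rc \in copyset B M).
Proof.
rewrite inE; apply: (iffP and3P) => [[/incrP H1 /incrP H2 /forallP H3]|[H1 H2 H3]].
  by split=> // i j; move/forallP: (H3 i) => /(_ j) /eqP.
split; try exact/incrP.
by apply/forallP => i; apply/forallP => j; apply/eqP.
Qed.

Lemma copies_le (T : finType) (s t n : nat) (B : 'M[T]_(s, t)) (M : 'M[T]_n) :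
  (copies B M <= n ^ s * n ^ t)%N.
Proof.
rewrite copiesE; apply: leq_trans (max_card _) _.
by rewrite card_prod !card_ffun !card_ord.
Qed.

Section Step.
Variables (T : finType) (n s t : nat) (A : 'M[T]_(s.+2, t)) (i : 'I_(s.+1)) (M : 'M[T]_n).
Hypothesis eqrow : forall j, A (widen_ord (leqnSn _) i) j = A (lift ord0 i) j.

Let ip : 'I_(s.+2) := lift ord0 i.
Let A1 := row' ip A.
Let X1 := ({ffun 'I_(s.+1) -> 'I_n} * {ffun 'I_t -> 'I_n})%type.
Let X := ({ffun 'I_(s.+2) -> 'I_n} * {ffun 'I_t -> 'I_n})%type.
Let S1 := copyset A1 M.
Let S := copyset A M.
Let key (x : X1) : {ffun 'I_s -> 'I_n} * {ffun 'I_t -> 'I_n} :=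
  ([ffun m => x.1 (lift i m)], x.2).
Let P := [set p : X1 * X1 | [&& p.1 \in S1, p.2 \in S1, key p.1 == key p.2 &
                                 (p.1.1 i < p.2.1 i)%N]].
Let Q := [set p : X1 * X1 | [&& p.1 \in S1, p.2 \in S1 & key p.1 == key p.2]].

Lemma key_agree (x y : X1) : key x = key y -> (forall b, b != i -> x.1 b = y.1 b) /\ x.2 = y.2.
Proof.
move=> K; have E1 := congr1 fst K; have E2 := congr1 snd K; split=> // b; case: (unliftP i b) => [m ->|->]; last by rewrite eqxx.
move=> _.
by have := congr1 (fun f : {ffun 'I_s -> 'I_n} => f m) E1; rewrite /= !ffunE.
Qed.

Let merge (p : X1 * X1) : {ffun 'I_(s.+2) -> 'I_n} * {ffun 'I_t -> 'I_n} :=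
  ([ffun k => if unlift ip k is Some k' then p.1.1 k' else p.2.1 i], p.1.2).

Lemma lift_ip_i : lift ip i = widen_ord (leqnSn _) i.
Proof. by apply: val_inj; rewrite /= /bump /= ltnn. Qed.

Lemma merge_lift p k : (merge p).1 (lift ip k) = p.1.1 k.
Proof. by rewrite ffunE liftK. Qed.
Lemma merge_ip p : (merge p).1 ip = p.2.1 i.
Proof. by rewrite ffunE unlift_none. Qed.
Lemma merge2 p : (merge p).2 = p.1.2.
Proof. by []. Qed.

Lemma merge_inj : {in P &, injective merge}.
Proof.
move=> p q; rewrite !inE => /and4P [_ _ /eqP k1 _] /and4P [_ _ /eqP k2 _] K.
have Ex1 : p.1.1 = q.1.1.
  apply/ffunP => m; have := congr1 (fun f : X => f.1 (lift ip m)) K.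
  by rewrite /= !merge_lift.
have Ey : p.2.1 i = q.2.1 i.
  by have := congr1 (fun f : X => f.1 ip) K; rewrite /= !merge_ip.
have Ex2 : p.1.2 = q.1.2 by have := congr1 snd K; rewrite !merge2.
case: (key_agree k1) => a1 b1; case: (key_agree k2) => a2 b2.
move: p q Ex1 Ey Ex2 a1 b1 a2 b2 {K k1 k2} => [[x1 x2] [y1 y2]] [[x1' x2'] [y1' y2']] /= Ex1 Ey Ex2 a1 b1 a2 b2.
subst; congr (_, (_, _)).
apply/ffunP => b; have [->|nb] := eqVneq b i; first by [].
by rewrite -a1 // -a2.
Qed.

Lemma merge_in : {in P, forall p, merge p \in S}.
Proof.
move=> [[x1 x2] [y1 y2]]; rewrite in_set /= /S1 => /and4P [/copysetP [xi xc xe] /copysetP [yi yc ye] /eqP kk lt].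
case: (key_agree kk) => /= ag ec.
rewrite /S; apply/copysetP; split => //=.
- move=> a b ab; rewrite !ffunE.
  case: (unliftP ip a) => [a'|] Ea; case: (unliftP ip b) => [b'|] Eb; subst.
  + by apply: xi; move: ab; rewrite /= !ltnNge leq_bump2.
  + have ai : (a' <= i)%N.
      move: ab; rewrite /= /bump /=; case: leqP => h /=; rewrite ?add0n ?add1n => ab; lia.
    apply: leq_ltn_trans lt; move: ai; rewrite leq_eqVlt => /orP [/eqP e| h].
      by rewrite (val_inj e).
    exact/ltnW/xi.
  + have bi : (i < b')%N.
      move: ab; rewrite /= /bump /=; case: leqP => h /=; rewrite ?add0n ?add1n => ab; lia.
    rewrite ag; first exact: yi.
    by rewrite neq_ltn bi orbT.
  + by rewrite ltnn in ab.
- move=> k j; rewrite ffunE.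
  case: (unliftP ip k) => [a|] ->.
    by rewrite xe /A1 mxE.
  rewrite ec ye /A1 mxE lift_ip_i; exact: eqrow.
Qed.


Lemma card_P_S : (#|P| <= #|S|)%N.
Proof.
rewrite -(card_in_imset merge_inj); apply: subset_leq_card.
by apply/subsetP => _ /imsetP [p Pp ->]; exact: merge_in.
Qed.

Lemma card_Q_P : (#|Q| <= 2 * #|P| + #|S1|)%N.
Proof.
pose swap (p : X1 * X1) := (p.2, p.1).
pose diag (x : X1) := (x, x).
have sub : Q \subset (P :|: swap @: P) :|: diag @: S1.
  apply/subsetP => p; rewrite in_set => /and3P [p1 p2 /eqP kk].
  case: (key_agree kk) => ag ec.
  rewrite !in_setU; case: (ltngtP (p.1.1 i) (p.2.1 i)) => h.
  - by rewrite in_set p1 p2 kk eqxx h.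
  - apply/orP; left; apply/orP; right; apply/imsetP; exists (swap p); last by case: p {p1 p2 kk ag ec h}.
    by rewrite in_set p1 p2 kk eqxx h.
  - apply/orP; right; apply/imsetP; exists p.1 => //.
    have e1 : p.1.1 = p.2.1.
      apply/ffunP => b; have [->|nb] := eqVneq b i; first by apply: val_inj.
      exact: ag.
    by case: p {p1 p2 kk ag h} e1 ec => [[a1 a2] [b1 b2]] /= -> ->.
apply: leq_trans (subset_leq_card sub) _.
apply: leq_trans (leq_card_setU _ _) _.
rewrite mul2n -addnn; apply: leq_add; last exact: leq_imset_card.
apply: leq_trans (leq_card_setU _ _) _.
by rewrite leq_add2l leq_imset_card.
Qed.

Let F (k : {ffun 'I_s -> 'I_n} * {ffun 'I_t -> 'I_n}) := #|[set x in S1 | key x == k]|.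

Lemma sum_F : #|S1| = (\sum_k F k)%N.
Proof.
rewrite -sum1_card (partition_big key predT) //=; apply: eq_bigr => k _.
by rewrite /F -sum1_card; apply: eq_bigl => x; rewrite !inE.
Qed.

Lemma sum_F2 : #|Q| = (\sum_k F k * F k)%N.
Proof.
rewrite -sum1_card (partition_big (fun p : X1 * X1 => key p.1) predT) //=.
apply: eq_bigr => k _; rewrite /F -cardsX -sum1_card; apply: eq_bigl => p.
rewrite !inE; have [<-|ne] := eqVneq (key p.1) k.
  by rewrite (eq_sym (key p.2)) !andbT.
by rewrite !andbF.
Qed.

Local Open Scope ring_scope.
Lemma step_real (R : realFieldType) :
  (#|S1|%:R ^+ 2 : R) <= (n ^ s * n ^ t)%:R * (2 * #|S| + #|S1|)%:R.
Proof.
have cs := cauchy_schwarz (fun k => (F k)%:R : R).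
rewrite -natr_sum -sum_F card_prod !card_ffun !card_ord in cs.
apply: le_trans cs _; apply: ler_wpM2l; first exact: ler0n.
under eq_bigr do rewrite -natrX.
rewrite -natr_sum ler_nat.
have -> : (\sum_i F i ^ 2)%N = #|Q| by rewrite sum_F2; apply: eq_bigr => k _; rewrite mulnn.
apply: leq_trans card_Q_P _.
by rewrite leq_add2r leq_mul2l card_P_S orbT.
Qed.

End Step.

Section StepFinal.
Local Open Scope ring_scope.

Lemma real_step (R : realFieldType) (a b N x eps : R) :
  0 < eps -> 0 <= a -> 0 <= b ->
  a ^+ 2 <= N * (b *+ 2 + a) -> a <= N * x -> eps * (N * x) <= a ->
  2%:R / eps ^+ 2 <= x -> 0 < N ->
  eps ^+ 2 / 4%:R * (N * x ^+ 2) <= b.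
Proof.
move=> e0 a0 b0 h1 h2 h3 h4 hN.
have x0 : 0 < x.
  apply: lt_le_trans h4; apply: divr_gt0 => //; exact: exprn_gt0.
have Nx0 : 0 < N * x by exact: mulr_gt0.
have he1 : eps <= 1.
  have : eps * (N * x) <= 1 * (N * x) by rewrite mul1r; exact: le_trans h3 h2.
  by rewrite ler_pM2r.
have h5 : 2%:R <= eps ^+ 2 * x.
  have e2 : 0 < eps ^+ 2 by exact: exprn_gt0.
  have := ler_wpM2l (ltW e2) h4.
  by rewrite mulrCA divff ?mulr1 // gt_eqF.
have h6 : 2%:R <= eps * x.
  apply: le_trans h5 _; rewrite expr2 -mulrA ler_piMl //.
  by apply: mulr_ge0; [exact: ltW|exact: ltW].
have h7 : N * (eps * x) / 2%:R <= a - N.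
  nra.
have h8 : a * (N * (eps * x) / 2%:R) <= N * (b *+ 2).
  have : a * (N * (eps * x) / 2%:R) <= a * (a - N) by apply: ler_wpM2l.
  move=> h; apply: le_trans h _; nra.
have h9 : (eps * (N * x)) * (N * (eps * x) / 2%:R) <= N * (b *+ 2).
  apply: le_trans h8; apply: ler_wpM2r => //.
  apply: divr_ge0 => //; apply: mulr_ge0; [exact: ltW|]; apply: mulr_ge0; exact: ltW.
nra.
Qed.

End StepFinal.

Section StepCopies.
Local Open Scope ring_scope.

Lemma step_copies (R : realFieldType) (T : finType) n s t (A : 'M[T]_(s.+2,t))
    (i : 'I_(s.+1)) (M : 'M[T]_n) :
  (forall j, A (widen_ord (leqnSn _) i) j = A (lift ord0 i) j) ->
  forall eps : R, 0 < eps -> 2%:R / eps ^+ 2 <= n%:R ->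
  eps * n%:R ^+ (s.+1 + t) <= (copies (row' (lift ord0 i) A) M)%:R ->
  eps ^+ 2 / 4%:R * n%:R ^+ (s.+2 + t) <= (copies A M)%:R.
Proof.
move=> eqrow eps e0 hn hc.
have h1 := @step_real T n s t A i M eqrow R.
have h2 := copies_le (row' (lift ord0 i) A) M.
have x0 : (0 : R) < n%:R.
  apply: lt_le_trans hn; apply: divr_gt0 => //; exact: exprn_gt0.
have hN : (0 : R) < (n ^ s * n ^ t)%:R.
  by rewrite natrM !natrX; apply: mulr_gt0; apply: exprn_gt0.
have E1 : n%:R ^+ (s.+1 + t) = (n ^ s * n ^ t)%:R * n%:R :> R.
  by rewrite natrM !natrX addSn exprS exprD; ring.
have E2 : n%:R ^+ (s.+2 + t) = (n ^ s * n ^ t)%:R * n%:R ^+ 2 :> R.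
  by rewrite natrM !natrX !addSn !exprS exprD; ring.
rewrite E2; apply: (real_step (a := (copies (row' (lift ord0 i) A) M)%:R)) => //.
- move: h1; rewrite -!copiesE natrD [(2 * _)%:R]natrM; nra.
- by rewrite -natrM ler_nat; apply: (leq_trans h2); rewrite expnS -mulnA mulnC.
- by rewrite -E1.
Qed.

End StepCopies.

End File_H2.
Section File_H3base.

Local Open Scope ring_scope.

Definition Good (R : realType) (T : finType) s0 s t (B : 'M[T]_(s0,t)) (A : 'M[T]_(s,t)) : Prop :=
  exists p1 p2 : {poly R},
    forall eps : R, 0 < eps ->
      0 < p2.[eps^-1] /\
      forall n : nat, p1.[eps^-1] <= n%:R ->
        forall M : 'M[T]_n,
          eps * n%:R ^+ (s0 + t) <= (copies B M)%:R ->
          (p2.[eps^-1])^-1 * n%:R ^+ (s + t) <= (copies A M)%:R.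

Lemma Good_step (R : realType) (T : finType) s0 s t (B : 'M[T]_(s0,t)) (A : 'M[T]_(s.+2,t))
    (i : 'I_(s.+1)) :
  (forall j, A (widen_ord (leqnSn _) i) j = A (lift ord0 i) j) ->
  Good R B (row' (lift ord0 i) A) -> Good R B A.
Proof.
move=> eqrow [p1 [p2 H]].
exists (p1 * p1 + 1%:P + 2%:P * (p2 * p2)), (4%:P * (p2 * p2)) => eps e0.
have [hp hg] := H eps e0.
rewrite !(hornerD, hornerM, hornerC).
set y := p2.[eps^-1]; set z := p1.[eps^-1].
split; first by apply: mulr_gt0 => //; apply: mulr_gt0.
move=> n hn M hc.
have hn1 : z <= n%:R.
  apply: le_trans hn; have h1 := sqr_ge0 (z *+ 2 - 1); have h2 := sqr_ge0 y; nra.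
have hA1 := hg n hn1 M hc.
have yi0 : 0 < y^-1 by rewrite invr_gt0.
have := step_copies eqrow yi0 _ hA1.
have -> : (4 * (y * y))^-1 = y^-1 ^+ 2 / 4 by field; rewrite gt_eqF.
apply.
apply: le_trans hn.
have -> : 2 / y^-1 ^+ 2 = 2 * (y * y) by field; rewrite gt_eqF.
nra.
Qed.

Lemma Good_base (R : realType) (T : finType) s0 s t (B : 'M[T]_(s0,t)) (A : 'M[T]_(s,t)) :
  s = s0 -> (forall n (M : 'M[T]_n), (copies B M <= copies A M)%N) -> Good R B A.
Proof.
move=> e H; subst s0.
exists 0, 'X => eps e0; rewrite hornerX invrK; split; first by rewrite invr_gt0.
by move=> n _ M hc; apply: le_trans hc _; rewrite ler_nat; exact: H.
Qed.

Lemma copies_mono (T : finType) s s0 t (A : 'M[T]_(s,t)) (B : 'M[T]_(s0,t))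
    (phi : 'I_s -> 'I_s0) n (M : 'M[T]_n) :
  (forall k k' : 'I_s, (k < k')%N -> (phi k < phi k')%N) -> (forall y, exists k, phi k = y) ->
  (forall k j, A k j = B (phi k) j) -> (copies B M <= copies A M)%N.
Proof.
move=> hinc hsurj hA; rewrite !copiesE.
pose f (rc : {ffun 'I_s0 -> 'I_n} * {ffun 'I_t -> 'I_n}) :
  {ffun 'I_s -> 'I_n} * {ffun 'I_t -> 'I_n} := ([ffun k => rc.1 (phi k)], rc.2).
have inj : injective f.
  move=> [r c] [r' c'] K; have K2 := congr1 snd K; rewrite /= in K2; subst c'.
  congr pair; apply/ffunP => y; have [k <-] := hsurj y.
  by have := congr1 (fun q : {ffun 'I_s -> 'I_n} * {ffun 'I_t -> 'I_n} => q.1 k) K; rewrite /= !ffunE.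
rewrite -(card_imset _ inj); apply: subset_leq_card.
apply/subsetP => _ /imsetP [rc /copysetP [h1 h2 h3] ->]; apply/copysetP; split => //=.
  by move=> a b ab; rewrite !ffunE; apply: h1; apply: hinc.
by move=> k j; rewrite ffunE h3 hA.
Qed.

Lemma inj_case (R : realType) (T : finType) s0 s t (B : 'M[T]_(s0,t)) (A : 'M[T]_(s,t))
    (phi : 'I_s -> 'I_s0) :
  (forall k k' : 'I_s, (k < k')%N -> (phi k < phi k')%N) -> (forall y, exists k, phi k = y) ->
  (forall k j, A k j = B (phi k) j) -> Good R B A.
Proof.
move=> hinc hsurj hA; apply: Good_base; last by move=> n M; exact: copies_mono hinc hsurj hA.
apply/eqP; rewrite eqn_leq; apply/andP; split.
  have inj : injective phi.
    move=> k k' e; apply: val_inj; case: (ltngtP k k') => // h.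
      by have := hinc _ _ h; rewrite e ltnn.
    by have := hinc _ _ h; rewrite e ltnn.
  by have := @leq_card _ _ phi inj; rewrite !card_ord.
have sub : [set: 'I_s0] \subset phi @: [set: 'I_s].
  by apply/subsetP => y _; have [k <-] := hsurj y; apply: imset_f; rewrite inE.
have := leq_trans (subset_leq_card sub) (leq_imset_card _ _).
by rewrite !cardsT !card_ord.
Qed.


End File_H3base.
Section File_H4.

Local Open Scope ring_scope.

Lemma expand (R : realType) (T : finType) s0 t (B : 'M[T]_(s0,t)) :
  forall m s (A : 'M[T]_(s,t)) (phi : 'I_s -> 'I_s0), (s <= m)%N ->
  (forall k k' : 'I_s, (k <= k')%N -> (phi k <= phi k')%N) ->
  (forall y, exists k, phi k = y) ->
  (forall k j, A k j = B (phi k) j) -> Good R B A.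
Proof.
elim=> [|m IH] s A phi hs hmono hsurj hA;
  case: (pickP (fun p : 'I_s * 'I_s => (p.1 < p.2)%N && (phi p.1 == phi p.2)))
    => [[k k'] /andP [/= kk' /eqP ee] | none].
- by have := ltn_ord k; lia.
- apply: (@inj_case R T s0 s t B A phi) => // a b ab.
  rewrite ltn_neqAle (hmono _ _ (ltnW ab)) andbT.
  by apply/negP => /eqP /val_inj e; have := none (a, b); rewrite /= ab e eqxx.
- move: A phi hmono hsurj hA k k' kk' ee hs.
  case: s => [|[|s1]] A phi hmono hsurj hA k k' kk' ee hs.
  + by have := ltn_ord k; rewrite ltn0.
  + by exfalso; have := ltn_ord k'; move: kk'; lia.
  have ki : (k < s1.+1)%N by apply: leq_trans kk' _; rewrite -ltnS.
  pose i : 'I_(s1.+1) := Ordinal ki.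
  have wi : widen_ord (leqnSn _) i = k by apply: val_inj.
  have hli : (lift ord0 i <= k')%N by exact: kk'.
  have ephi : phi (widen_ord (leqnSn _) i) = phi (lift ord0 i).
    apply/val_inj/eqP; rewrite eqn_leq; apply/andP; split.
      by apply: hmono; rewrite /= leqnSn.
    by rewrite wi ee; apply: hmono.
  have eqrow : forall j, A (widen_ord (leqnSn _) i) j = A (lift ord0 i) j.
    by move=> j; rewrite !hA ephi.
  apply: (Good_step eqrow).
  have lii : lift (lift ord0 i) i = widen_ord (leqnSn _) i.
    by apply: val_inj; rewrite /= /bump /= ltnn.
  apply: (IH _ _ (fun k => phi (lift (lift ord0 i) k))) => //.
  + by move=> a b ab; apply: hmono; rewrite /= leq_bump2.
  + move=> y; have [k0 <-] := hsurj y.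
    case: (unliftP (lift ord0 i) k0) => [k1 ->|->]; first by exists k1.
    by exists i; rewrite lii.
  + by move=> a j; rewrite mxE hA.
- apply: (@inj_case R T s0 s t B A phi) => // a b ab.
  rewrite ltn_neqAle (hmono _ _ (ltnW ab)) andbT.
  by apply/negP => /eqP /val_inj e; have := none (a, b); rewrite /= ab e eqxx.
Qed.

End File_H4.
Section File_H5.


Lemma count_sorted (K : seq nat) m : sorted ltn K -> (m < size K)%N ->
  count (fun a => a <= nth 0 K m)%N K = m.+1.
Proof.
elim: K m => [|x K IH] m //= hs hm.
have hall := order_path_min ltn_trans hs.
have hs' := path_sorted hs.
case: m hm => [|m] hm /=.
  suff -> : count (fun a => a <= x)%N K = 0%N by rewrite leqnn.
  rewrite -(count_pred0 K); apply: eq_in_count => a aK /=.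
  by move/allP: hall => /(_ a aK) xa; rewrite leqNgt xa.
rewrite IH //.
have : nth 0 K m \in K by apply: mem_nth.
by move/allP: hall => H /H /ltnW ->.
Qed.

Lemma ord_absurd0 (k : 'I_0) : False.
Proof. by case: k. Qed.

Section Dedup.
Variables (T : finType) (s t : nat) (A : 'M[T]_(s.+1, t)).

Let K := kept_rows A.

Lemma K_sorted : sorted ltn (map val K).
Proof.
rewrite sorted_map /K /kept_rows; apply: sorted_filter.
  by move=> b a c /= ab bc; apply: ltn_trans ab bc.
by rewrite -sorted_map val_enum_ord iota_ltn_sorted.
Qed.

Lemma ord0_in_K : ord0 \in K.
Proof. by rewrite /K /kept_rows mem_filter mem_enum /keep_row eqxx. Qed.

Lemma size_K_gt0 : (0 < size K)%N.
Proof. by have := ord0_in_K; case: (K). Qed.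

Let cnt (k : 'I_(s.+1)) := count (fun a : 'I_(s.+1) => (a <= k)%N) K.

Lemma cnt_ge1 k : (0 < cnt k)%N.
Proof. by rewrite /cnt -has_count; apply/hasP; exists ord0; [exact: ord0_in_K|]. Qed.

Lemma cnt_le k : (cnt k <= size K)%N.
Proof. exact: count_size. Qed.

Lemma cnt_nth m : (m < size K)%N -> cnt (nth ord0 K m) = m.+1.
Proof.
move=> hm; rewrite /cnt.
have -> : count (fun a : 'I_(s.+1) => (a <= nth ord0 K m)%N) K =
          count (fun v => v <= nth 0 (map val K) m)%N (map val K).
  by rewrite count_map (nth_map ord0).
by apply: count_sorted; [exact: K_sorted | rewrite size_map].
Qed.

Let d : 'I_(size K) := Ordinal size_K_gt0.
Definition phi_dd (k : 'I_(s.+1)) : 'I_(size K) := insubd d (cnt k).-1.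

Lemma val_phi k : val (phi_dd k) = (cnt k).-1.
Proof.
rewrite /phi_dd val_insubd; have := cnt_ge1 k; have := cnt_le k.
by case: (cnt k) => // c /= h _; rewrite h.
Qed.

Lemma phi_mono (k k' : 'I_(s.+1)) : (k <= k')%N -> (phi_dd k <= phi_dd k')%N.
Proof.
move=> kk; rewrite !val_phi.
have : (cnt k <= cnt k')%N.
  by apply: sub_count => a /= ak; apply: leq_trans ak kk.
by move=> h; rewrite -!subn1 leq_sub2r.
Qed.

Lemma phi_surj (y : 'I_(size K)) : exists k, phi_dd k = y.
Proof.
by exists (nth ord0 K y); apply: val_inj; rewrite val_phi cnt_nth.
Qed.

Lemma inK k : (k \in K) = keep_row A k.
Proof. by rewrite /K /kept_rows mem_filter mem_enum andbT. Qed.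

Lemma kept_case k j : k \in K -> A k j = A (nth ord0 K (cnt k).-1) j.
Proof.
move=> kK.
have -> : cnt k = (index k K).+1 by rewrite -{1}(nth_index ord0 kK) cnt_nth // index_mem.
by rewrite /= nth_index.
Qed.

Lemma phi_entries k j : A k j = dedup A (phi_dd k) j.
Proof.
rewrite /dedup mxE (tnth_nth ord0) /= val_phi.
move: {2}(val k) (erefl (val k)) => v; elim: v k => [|v IH] k hk.
  by apply: kept_case; rewrite inK /keep_row hk.
case kK: (k \in K); first exact: kept_case.
have hv : (v < s.+1)%N by have := ltn_ord k; rewrite hk => /ltnW.
pose k0 : 'I_(s.+1) := Ordinal hv.
have nk : ~~ keep_row A k by rewrite -inK kK.
move: nk; rewrite /keep_row negb_or => /andP [_].
rewrite negb_exists => /forallP /(_ k0); rewrite /= hk eqxx /= negbK => /eqP E.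
have -> : A k j = A k0 j by have := congr1 (fun r : 'rV[T]_t => r ord0 j) E; rewrite !mxE.
have -> : cnt k = cnt k0.
  rewrite /cnt; apply: eq_in_count => a aK /=.
  rewrite hk leq_eqVlt ltnS.
  case: eqP => // ea; exfalso.
  have : a = k by apply: val_inj; exact: (etrans ea (esym hk)).
  by move=> eak; rewrite eak kK in aK.
exact: IH.
Qed.

End Dedup.

Local Open Scope ring_scope.



End File_H5.

End Aux.
Import Aux.
Unset Implicit Arguments.
Local Open Scope ring_scope.

Theorem lemma3p2 (R : realType) (T : finType) (s t : nat) (A : 'M[T]_(s, t)) :
  exists p1 p2 : {poly R},
    forall eps : R, 0 < eps ->
      0 < p2.[eps^-1] /\
      forall n : nat, p1.[eps^-1] <= n%:R ->
        forall M : 'M[T]_n,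
          eps * n%:R ^+ (dedup_size A + t) <= (copies (dedup A) M)%:R ->
          (p2.[eps^-1])^-1 * n%:R ^+ (s + t) <= (copies A M)%:R.
Proof.
have G : Good R (dedup A) A.
  case: s A => [|s'] A0.
    apply: (@expand R T _ t (dedup A0) 0 0 A0 (fun k => False_rect _ (ord_absurd0 k))) => //.
    - by move=> k; case: (ord_absurd0 k).
    - move=> y; exfalso; have := ltn_ord y.
      have : (dedup_size A0 <= 0)%N.
        rewrite /dedup_size /kept_rows size_filter.
        by apply: leq_trans (count_size _ _) _; rewrite size_enum_ord.
      lia.
    - by move=> k; case: (ord_absurd0 k).
  apply: (@expand R T _ t (dedup A0) s'.+1 s'.+1 A0 (@phi_dd T s' t A0)) => //.
  - exact: phi_mono.
  - exact: phi_surj.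
  - exact: phi_entries.
exact: G.
Qed.
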